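(* Let $n$ be a non-negative integer and $r,s\in\mathbb{C}\setminus\mathbb{Z}^{-}$ with $s\neq0$ and $r-s\notin\mathbb{Z}^{-}$. Then \[ \begin{aligned} &\sum_{k=0}^{n}\binom{n}{k}\frac{H_{k+s}-H_{n-k+r-s}}{(k+2)(k+s)\binom{n+r}{k+s}}-\sum_{k=0}^{n}\binom{n}{k}\frac{1}{(k+2)(k+s)^2\binom{n+r}{k+s}}\\ &\quad=\sum_{k=0}^{n}\binom{n}{k}\frac{(-1)^k(H_{k+s}-H_{r-s})}{(k+1)(k+2)(k+s)\binom{k+r}{k+s}}-\sum_{k=0}^{n}\binom{n}{k}\frac{(-1)^k}{(k+1)(k+2)(k+s)^2\binom{k+r}{k+s}}. \end{aligned} \]
   Context: $\mathbb{Z}^{-}$ denotes the set of negative integers. For complex $z$ not a negative integer, $H_z=\psi(z+1)+\gamma$ ($\psi$ the digamma function, $\gamma$ Euler's constant). Binomial coefficients with complex entries: $\binom{x}{y}=\frac{\Gamma(x+1)}{\Gamma(y+1)\Gamma(x-y+1)}$. *)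

(* Defs.v *)
From Stdlib Require Import Reals.
From Coquelicot Require Import Coquelicot.
Open Scope R_scope.

Definition Clim (u : nat -> C) : C :=
  (real (Lim_seq (fun m => Re (u m))), real (Lim_seq (fun m => Im (u m)))).

(* m^z for a positive integer m and complex z: exp (z * ln m). *)
Definition cpow_nat (m : nat) (z : C) : C :=
  (exp (Re z * ln (INR m)) * cos (Im z * ln (INR m)),
   exp (Re z * ln (INR m)) * sin (Im z * ln (INR m))).

Fixpoint rising_prod (z : C) (m : nat) : C :=
  match m with
  | O => z
  | S m' => Cmult (rising_prod z m') (Cplus z (RtoC (INR m)))
  end.

(* Euler's Gamma function via Gauss's limit formula (valid off the poles). *)
Definition CGamma (z : C) : C :=
  Clim (fun m => Cdiv (Cmult (RtoC (INR (Factorial.fact m))) (cpow_nat m z))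
                      (rising_prod z m)).

(* H_z = psi(z+1) + gamma, via the series  sum_{j>=1} z / (j (j+z)). *)
Definition CH (z : C) : C :=
  let t := fun j : nat => Cdiv z (Cmult (RtoC (INR (S j))) (Cplus (RtoC (INR (S j))) z)) in
  (Series (fun j => Re (t j)), Series (fun j => Im (t j))).

Definition Cbinom (x y : C) : C :=
  Cdiv (CGamma (Cplus x (RtoC 1)))
       (Cmult (CGamma (Cplus y (RtoC 1))) (CGamma (Cplus (Cminus x y) (RtoC 1)))).

Fixpoint Csum (n : nat) (f : nat -> C) : C :=
  match n with
  | O => f O
  | S n' => Cplus (Csum n' f) (f n)
  end.

Definition is_neg_int (z : C) : Prop := exists m : nat, z = RtoC (- INR (S m)).

(* Main.v *)
Require Import Defs.
From Stdlib Require Import Reals Lra Lia Factorial Arith.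
From Coquelicot Require Import Coquelicot.
Open Scope R_scope.

(* dual numbers over C *)
Definition D := (C * C)%type.
Definition dadd (x y : D) : D := (Cplus (fst x) (fst y), Cplus (snd x) (snd y)).
Definition dmul (x y : D) : D := (Cmult (fst x) (fst y), Cplus (Cmult (fst x) (snd y)) (Cmult (snd x) (fst y))).
Definition dopp (x : D) : D := (Copp (fst x), Copp (snd x)).
Definition dsub (x y : D) : D := dadd x (dopp y).
Definition d0 : D := (RtoC 0, RtoC 0).
Definition d1 : D := (RtoC 1, RtoC 0).

Ltac dsolve := repeat match goal with x : D |- _ => destruct x end;
  unfold dadd, dmul, dopp, dsub, d0, d1; simpl; apply injective_projections; simpl; ring.

Lemma D_ring : ring_theory d0 d1 dadd dmul dsub dopp (@eq D).
Proof. split; intros; dsolve. Qed.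
Add Ring Dring : D_ring.

Definition dc (x : R) : D := (RtoC x, RtoC 0).
Lemma dc_add x y : dc (x + y) = dadd (dc x) (dc y).
Proof. unfold dc, dadd; simpl. apply injective_projections; simpl; unfold RtoC, Cplus; simpl; f_equal; ring. Qed.
Lemma dc_mul x y : dc (x * y) = dmul (dc x) (dc y).
Proof. unfold dc, dmul; simpl. apply injective_projections; simpl; unfold RtoC, Cplus, Cmult; simpl; f_equal; ring. Qed.
Lemma dc_opp x : dc (- x) = dopp (dc x).
Proof. unfold dc, dopp; simpl. apply injective_projections; simpl; unfold RtoC, Copp; simpl; f_equal; ring. Qed.
Lemma dc1 : dc 1 = d1. Proof. reflexivity. Qed.
Lemma dc0 : dc 0 = d0. Proof. reflexivity. Qed.

Fixpoint dsum (n : nat) (f : nat -> D) : D :=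
  match n with O => d0 | S m => dadd (dsum m f) (f m) end.

Lemma dsum_ext n f g : (forall k, (k < n)%nat -> f k = g k) -> dsum n f = dsum n g.
Proof. induction n; simpl; intros H; auto. rewrite IHn by (intros; apply H; lia). rewrite H by lia; auto. Qed.

Lemma dsum_shift n f : dsum (S n) f = dadd (f O) (dsum n (fun k => f (S k))).
Proof. induction n. cbn [dsum]. ring. cbn [dsum] in *. rewrite IHn. ring. Qed.

Lemma dsum_add n f g : dsum n (fun k => dadd (f k) (g k)) = dadd (dsum n f) (dsum n g).
Proof. induction n; cbn [dsum]. ring. rewrite IHn; ring. Qed.

Lemma dsum_scal n a f : dsum n (fun k => dmul a (f k)) = dmul a (dsum n f).
Proof. induction n; cbn [dsum]. ring. rewrite IHn; ring. Qed.

Lemma pascal_sum n (g : nat -> D) :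
  dsum (S (S n)) (fun k => dmul (dc (Binomial.C (S n) k)) (g k)) =
  dadd (dsum (S n) (fun k => dmul (dc (Binomial.C n k)) (g k)))
       (dsum (S n) (fun k => dmul (dc (Binomial.C n k)) (g (S k)))).
Proof.
  rewrite dsum_shift. rewrite (dsum_shift n (fun k => dmul (dc (Binomial.C n k)) (g k))).
  simpl dsum at 1. simpl dsum at 3.
  rewrite !C_n_0, C_n_n, dc1.
  assert (H : dsum n (fun k => dmul (dc (Binomial.C (S n) (S k))) (g (S k))) =
    dadd (dsum n (fun k => dmul (dc (Binomial.C n (S k))) (g (S k))))
         (dsum n (fun k => dmul (dc (Binomial.C n k)) (g (S k))))).
  { rewrite <- dsum_add. apply dsum_ext. intros k Hk. rewrite <- pascal by lia.
    rewrite dc_add. ring. }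
  rewrite H, C_n_n, dc1. ring.
Qed.

Fixpoint poch (a : D) (k : nat) : D :=
  match k with O => d1 | S m => dmul (poch a m) (dadd a (dc (INR m))) end.

Lemma poch_S a k : poch a (S k) = dmul a (poch (dadd a d1) k).
Proof.
  induction k. cbn [poch]. change (INR 0) with 0%R. rewrite dc0. ring.
  change (poch a (S (S k))) with (dmul (poch a (S k)) (dadd a (dc (INR (S k))))).
  rewrite IHk. cbn [poch]. rewrite S_INR, dc_add, dc1. ring.
Qed.

Definition wt (p k : nat) : R := / INR (k + p + 1).
Definition beta (p j : nat) : R := INR (fact p) * INR (fact j) / INR (fact (p + j + 1)).

Lemma beta_rec p j : beta p j - beta p (S j) = beta (S p) j.
Proof.
  unfold beta.
  replace (S p + j + 1)%nat with (S (p + j + 1)) by lia.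
  replace (p + S j + 1)%nat with (S (p + j + 1)) by lia.
  rewrite !fact_simpl, !mult_INR.
  assert (0 < INR (fact (p + j + 1))) by (apply lt_0_INR, lt_O_fact).
  rewrite !S_INR, !plus_INR. simpl INR. field.
  pose proof (pos_INR p); pose proof (pos_INR j). lra.
Qed.

Definition Phi (n : nat) (s c : D) (p : nat) : D :=
  dsum (S n) (fun k => dmul (dc (Binomial.C n k)) (dmul (dmul (poch s k) (poch c (n - k))) (dc (wt p k)))).

Definition Psi (n : nat) (s R : D) (p : nat) : D :=
  dsum (S n) (fun j => dmul (dc (Binomial.C n j))
     (dmul (dc ((-1) ^ j * beta p j)) (dmul (poch s j) (poch (dadd R (dc (INR j))) (n - j))))).

Lemma Phi_rec n s c p :
  Phi (S n) s c p = dadd (dmul c (Phi n s (dadd c d1) p)) (dmul s (Phi n (dadd s d1) c (S p))).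
Proof.
  unfold Phi. rewrite pascal_sum. rewrite <- !dsum_scal. f_equal; apply dsum_ext; intros k Hk.
  - replace (S n - k)%nat with (S (n - k)) by lia. rewrite poch_S. ring.
  - replace (S n - S k)%nat with (n - k)%nat by lia. rewrite poch_S.
    unfold wt. replace (S k + p + 1)%nat with (k + S p + 1)%nat by lia. ring.
Qed.

Lemma dc_sub x y : dc (x - y) = dsub (dc x) (dc y).
Proof. unfold Rminus. rewrite dc_add, dc_opp. reflexivity. Qed.

Lemma dc_m1 : dc (-1) = dopp d1.
Proof. unfold dc, dopp, d1; simpl; apply injective_projections; simpl; unfold RtoC, Copp; simpl; f_equal; ring. Qed.

Lemma Psi_rec n s R p :
  Psi (S n) s R p = dadd (dmul (dsub R s) (Psi n s (dadd R d1) p)) (dmul s (Psi n (dadd s d1) (dadd R d1) (S p))).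
Proof.
  unfold Psi. rewrite pascal_sum. rewrite <- !dsum_scal.
  rewrite <- dsum_add. rewrite <- dsum_add. apply dsum_ext; intros k Hk.
  replace (S n - k)%nat with (S (n - k)) by lia.
  replace (S n - S k)%nat with (n - k)%nat by lia.
  rewrite (poch_S (dadd R (dc (INR k))) (n - k)).
  replace (dadd R (dc (INR (S k)))) with (dadd (dadd R (dc (INR k))) d1)
    by (rewrite S_INR, dc_add, dc1; ring).
  replace (dadd (dadd R d1) (dc (INR k))) with (dadd (dadd R (dc (INR k))) d1) by ring.
  rewrite <- beta_rec.
  cbn [poch pow].
  rewrite !dc_mul, dc_sub, dc_m1.
  set (P := poch s k). set (Q := poch (dadd s d1) k).
  assert (HPQ : dmul s Q = dmul P (dadd s (dc (INR k)))).
  { unfold P, Q. rewrite <- poch_S. reflexivity. }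
  ring [HPQ].
Qed.

Lemma Phi_Psi n : forall s c p, Phi n s c p = Psi n s (dadd s c) p.
Proof.
  induction n; intros s c p.
  - unfold Phi, Psi, wt, beta. simpl dsum. simpl Binomial.C.
    rewrite C_n_0. simpl. rewrite Nat.add_0_r.
    replace (INR (fact p) * 1 / INR (fact (p + 1)))%R with (/ INR (p + 1))%R.
    2:{ replace (p+1)%nat with (S p) by lia. rewrite fact_simpl, mult_INR.
        assert (0 < INR (fact p)) by (apply lt_0_INR, lt_O_fact).
        rewrite S_INR. field. pose proof (pos_INR p). lra. }
    rewrite dc1. replace (1 * / INR (p + 1))%R with (/ INR (p + 1))%R by ring. ring.
  - rewrite Phi_rec, Psi_rec, !IHn.
    replace (dsub (dadd s c) s) with c by ring.
    replace (dadd s (dadd c d1)) with (dadd (dadd s c) d1) by ring.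
    replace (dadd (dadd s d1) c) with (dadd (dadd s c) d1) by ring.
    reflexivity.
Qed.

Lemma im_le_Cmod (c : C) : Rabs (Im c) <= Cmod c.
Proof.
  destruct c as [a b]. unfold Cmod; simpl.
  rewrite <- sqrt_Rsqr_abs. apply sqrt_le_1_alt. unfold Rsqr. nra.
Qed.

Lemma Cmod_le_sum (c : C) : Cmod c <= Rabs (Re c) + Rabs (Im c).
Proof.
  destruct c as [a b]. unfold Cmod; simpl.
  apply Rsqr_incr_0_var.
  - rewrite Rsqr_sqrt by nra. unfold Rsqr.
    pose proof (Rabs_pos a); pose proof (Rabs_pos b).
    replace (a * (a * 1) + b * (b * 1)) with (Rabs a * Rabs a + Rabs b * Rabs b).
    nra. rewrite <- !Rabs_mult. rewrite !Rabs_right by nra. ring.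
  - pose proof (Rabs_pos a); pose proof (Rabs_pos b). lra.
Qed.

Lemma series_is_lim (a : nat -> R) (l : R) : is_series a l -> is_lim_seq (sum_n a) l.
Proof. intro H. exact H. Qed.
Lemma is_lim_series (a : nat -> R) (l : R) : is_lim_seq (sum_n a) l -> is_series a l.
Proof. intro H. exact H. Qed.

Lemma sum_n_le_series (e : nat -> R) (Sv : R) n :
  (forall k, 0 <= e k) -> is_series e Sv -> sum_n e n <= Sv.
Proof.
  intros He HS. apply series_is_lim in HS.
  assert (H2 : is_lim_seq (fun k => sum_n e (k + n)) Sv) by (apply (is_lim_seq_incr_n (sum_n e) n Sv); auto).
  assert (Hmon : forall k, sum_n e n <= sum_n e (k + n)).
  { induction k. simpl. lra. simpl. rewrite sum_Sn. simpl. unfold plus; simpl. specialize (He (S (k+n))). lra. }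
  pose proof (is_lim_seq_le _ _ _ _ Hmon (is_lim_seq_const (sum_n e n)) H2). simpl in H. exact H.
Qed.

Lemma telescope_cv (x d : nat -> R) :
  (forall m, x (S m) - x m = d m) -> ex_series d -> exists L : R, is_lim_seq x L.
Proof.
  intros Hd [Sv HS]. exists (x O + Sv).
  apply is_lim_seq_incr_1.
  apply is_lim_seq_ext with (fun m => x O + sum_n d m).
  { intros m. induction m. rewrite sum_O. specialize (Hd O). lra.
    rewrite sum_Sn. unfold plus; simpl. specialize (Hd (S m)). lra. }
  apply is_lim_seq_plus'. apply is_lim_seq_const. apply series_is_lim. exact HS.
Qed.

Lemma prod_cv (v rho : nat -> C) (e : nat -> R) :
  (forall m, v (S m) = Cmult (v m) (rho m)) ->
  (forall m, Cmod (Cminus (rho m) (RtoC 1)) <= e m) -> ex_series e ->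
  exists L : C, is_lim_seq (fun m => Re (v m)) (Re L) /\ is_lim_seq (fun m => Im (v m)) (Im L).
Proof.
  intros Hv He [Sv HS].
  assert (He0 : forall m, 0 <= e m) by (intro m; eapply Rle_trans; [apply Cmod_ge_0|apply He]).
  set (B := Cmod (v O) * exp Sv).
  assert (HB : forall m, Cmod (v m) <= Cmod (v O) * exp (match m with O => 0 | S k => sum_n e k end)).
  { induction m.
    - rewrite exp_0. lra.
    - rewrite Hv, Cmod_mult.
      assert (Hr : Cmod (rho m) <= 1 + e m).
      { replace (rho m) with (Cplus (Cminus (rho m) (RtoC 1)) (RtoC 1)) by ring.
        eapply Rle_trans. apply Cmod_triangle. rewrite Cmod_R, Rabs_R1. specialize (He m). lra. }
      assert (Hx : (1 + e m) * exp (match m with O => 0 | S k => sum_n e k end) <= exp (sum_n e m)).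
      { destruct m.
        - rewrite sum_O, exp_0, Rmult_1_r. apply exp_ineq1_le.
        - rewrite sum_Sn. unfold plus; simpl. rewrite exp_plus, Rmult_comm.
          apply Rmult_le_compat_l. apply Rlt_le, exp_pos. apply exp_ineq1_le. }
      pose proof (Cmod_ge_0 (v m)). pose proof (Cmod_ge_0 (rho m)). pose proof (Cmod_ge_0 (v O)).
      apply Rle_trans with (Cmod (v O) * exp (match m with O => 0 | S k => sum_n e k end) * (1 + e m)).
      + apply Rmult_le_compat; auto.
      + rewrite Rmult_assoc. apply Rmult_le_compat_l; auto. lra. }
  assert (HB' : forall m, Cmod (v m) <= B).
  { intro m. eapply Rle_trans. apply HB. unfold B. apply Rmult_le_compat_l. apply Cmod_ge_0.
    assert (Ht : (match m with O => 0 | S k => sum_n e k end) <= Sv).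
    { destruct m. pose proof (sum_n_le_series e Sv O He0 HS). rewrite sum_O in H. specialize (He0 O). lra.
      apply sum_n_le_series; auto. }
    destruct (Rle_lt_or_eq_dec _ _ Ht) as [h|h]. left; apply exp_increasing; auto. right; rewrite h; auto. }
  assert (Hdiff : forall m, Cmod (Cminus (v (S m)) (v m)) <= B * e m).
  { intro m. rewrite Hv. replace (Cminus (Cmult (v m) (rho m)) (v m)) with (Cmult (v m) (Cminus (rho m) (RtoC 1))) by ring.
    rewrite Cmod_mult. apply Rmult_le_compat; auto using Cmod_ge_0. }
  assert (HBe : ex_series (fun m => B * e m)).
  { exists (B * Sv). apply (is_series_scal_l (K:=R_AbsRing) (V:=R_NormedModule)). exact HS. }
  destruct (telescope_cv (fun m => Re (v m)) (fun m => Re (v (S m)) - Re (v m))) as [L1 H1]; auto.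
  { apply (ex_series_le (K:=R_AbsRing) (V:=R_CompleteNormedModule)) with (fun m => B * e m); auto. intro m. unfold norm; simpl.
    eapply Rle_trans. 2: apply Hdiff. replace (Re (v (S m)) - Re (v m)) with (Re (Cminus (v (S m)) (v m))).
    apply re_le_Cmod. destruct (v (S m)), (v m); simpl; ring. }
  destruct (telescope_cv (fun m => Im (v m)) (fun m => Im (v (S m)) - Im (v m))) as [L2 H2]; auto.
  { apply (ex_series_le (K:=R_AbsRing) (V:=R_CompleteNormedModule)) with (fun m => B * e m); auto. intro m. unfold norm; simpl.
    eapply Rle_trans. 2: apply Hdiff. replace (Im (v (S m)) - Im (v m)) with (Im (Cminus (v (S m)) (v m))).
    apply im_le_Cmod. destruct (v (S m)), (v m); simpl; ring. }
  exists (L1, L2). simpl. auto.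
Qed.

Lemma exp_upper a : a < 1 -> exp a <= / (1 - a).
Proof.
  intro H. pose proof (exp_ineq1_le (- a)). pose proof (exp_pos a).
  replace (exp a) with (/ exp (- a)) by (rewrite exp_Ropp, Rinv_inv; auto).
  apply Rinv_le_contravar; lra.
Qed.

Lemma exp_R1 a : Rabs a <= / 2 -> Rabs (exp a - 1 - a) <= 2 * a ^ 2.
Proof.
  intro H.
  assert (Ha : - / 2 <= a <= / 2) by (apply Rabs_le_between; auto) ; clear H.
  pose proof (exp_ineq1_le a). pose proof (exp_upper a ltac:(lra)).
  rewrite Rabs_right by lra.
  assert (/ (1 - a) - 1 - a <= 2 * a ^ 2).
  { replace (/ (1 - a) - 1 - a) with (a ^ 2 / (1 - a)) by (field; lra).
    unfold Rdiv. rewrite Rmult_comm. apply Rmult_le_compat_r. nra.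
    replace 2 with (/ / 2) by (field). apply Rinv_le_contravar; lra. }
  lra.
Qed.

Lemma sin_R3 b : Rabs b <= / 2 -> Rabs (sin b - b) <= b ^ 2 /\ Rabs (sin b) <= Rabs b.
Proof.
  assert (HP := PI2_1).
  assert (Hpos : forall c, 0 <= c <= / 2 -> c - c ^ 3 / 6 <= sin c <= c).
  { intros c Hc. destruct (sin_bound c 0 ltac:(lra) ltac:(lra)) as [h1 h2].
    unfold sin_approx, sin_term in h1, h2. simpl in h1, h2.
    ring_simplify in h1. ring_simplify in h2.
    assert (c ^ 5 <= c ^ 3).
    { replace (c^5) with (c^3 * (c*c)) by ring. rewrite <- (Rmult_1_r (c^3)) at 2.
      apply Rmult_le_compat_l. apply pow_le; lra. nra. }
    assert (0 <= c ^ 3) by (apply pow_le; lra). split; lra. }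
  intro H. assert (Hb : - / 2 <= b <= / 2) by (apply Rabs_le_between; auto).
  destruct (Rle_or_lt 0 b) as [h|h].
  - destruct (Hpos b ltac:(lra)).
    assert (b ^ 3 <= 6 * b ^ 2) by (replace (b^3) with (b^2 * b) by ring; pose proof (pow2_ge_0 b); nra).
    assert (0 <= b ^ 3) by (apply pow_le; lra).
    rewrite (Rabs_right b) by lra. split; apply Rabs_le; split; nra.
  - destruct (Hpos (- b) ltac:(lra)). rewrite sin_neg in *.
    assert ((-b) ^ 3 <= 6 * b ^ 2) by (replace ((-b)^3) with (b^2 * (-b)) by ring; pose proof (pow2_ge_0 b); nra).
    assert (0 <= (-b) ^ 3) by (apply pow_le; lra).
    rewrite (Rabs_left1 b) by lra. split; apply Rabs_le; split; nra.
Qed.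

Lemma cos_R2 b : Rabs b <= / 2 -> Rabs (cos b - 1) <= b ^ 2 / 2.
Proof.
  assert (HP := PI2_1). intro H. assert (Hb : - / 2 <= b <= / 2) by (apply Rabs_le_between; auto).
  destruct (cos_bound b 0 ltac:(unfold Rdiv in *; lra) ltac:(unfold Rdiv in *; lra)) as [h1 h2].
  unfold cos_approx, cos_term in h1, h2. simpl in h1, h2. ring_simplify in h1. ring_simplify in h2.
  assert (b ^ 4 <= b ^ 2).
  { replace (b^4) with (b^2 * (b*b)) by ring. rewrite <- (Rmult_1_r (b^2)) at 2.
    apply Rmult_le_compat_l. apply pow2_ge_0. nra. }
  assert (0 <= b ^ 4) by (replace (b^4) with ((b^2)^2) by ring; apply pow2_ge_0).
  rewrite Rabs_left1 by lra. lra.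
Qed.

Definition cexp (w : C) : C := (exp (fst w) * cos (snd w), exp (fst w) * sin (snd w)).

Lemma cexp_add u v : cexp (Cplus u v) = Cmult (cexp u) (cexp v).
Proof.
  destruct u as [a b], v as [c d]. unfold cexp; simpl.
  rewrite exp_plus, cos_plus, sin_plus. apply injective_projections; simpl; ring.
Qed.

Lemma cexp_0 : cexp (RtoC 0) = RtoC 1.
Proof. unfold cexp; simpl. rewrite exp_0, cos_0, sin_0. apply injective_projections; simpl; ring. Qed.

Lemma cexp_bound w : Cmod w <= / 2 -> Cmod (Cminus (Cminus (cexp w) (RtoC 1)) w) <= 6 * Cmod w ^ 2.
Proof.
  intro Hw. destruct w as [a b].
  pose proof (re_le_Cmod (a, b)) as Ha. pose proof (im_le_Cmod (a, b)) as Hb. simpl in Ha, Hb.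
  set (c := Cmod (a, b)) in *.
  assert (Ha2 : Rabs a <= / 2) by lra. assert (Hb2 : Rabs b <= / 2) by lra.
  pose proof (exp_R1 a Ha2) as E1. destruct (sin_R3 b Hb2) as [S1 S2]. pose proof (cos_R2 b Hb2) as C1.
  assert (Hea : exp a <= 2).
  { eapply Rle_trans. apply exp_upper. apply Rabs_le_between in Ha2; lra.
    apply Rabs_le_between in Ha2. replace 2 with (/ / 2) by field. apply Rinv_le_contravar; lra. }
  pose proof (exp_pos a).
  eapply Rle_trans. apply Cmod_le_sum. unfold cexp; simpl.
  replace (exp a * cos b + - (1) + - a) with ((exp a - 1 - a) + exp a * (cos b - 1)) by ring.
  replace (exp a * sin b + - 0 + - b) with ((exp a - 1) * sin b + (sin b - b)) by ring.
  assert (R1 : Rabs ((exp a - 1 - a) + exp a * (cos b - 1)) <= 2 * a ^ 2 + b ^ 2).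
  { eapply Rle_trans. apply Rabs_triang. rewrite Rabs_mult, (Rabs_right (exp a)) by lra.
    assert (exp a * Rabs (cos b - 1) <= 2 * (b ^ 2 / 2)).
    { apply Rmult_le_compat; auto using Rabs_pos; lra. }
    lra. }
  assert (R2 : Rabs ((exp a - 1) * sin b + (sin b - b)) <= 2 * Rabs a * Rabs b + b ^ 2).
  { eapply Rle_trans. apply Rabs_triang. rewrite Rabs_mult.
    assert (Rabs (exp a - 1) <= 2 * Rabs a).
    { replace (exp a - 1) with ((exp a - 1 - a) + a) by ring. eapply Rle_trans. apply Rabs_triang.
      assert (a ^ 2 <= / 2 * Rabs a).
      { rewrite <- (Rabs_right (a^2)) by (apply Rle_ge, pow2_ge_0). rewrite <- RPow_abs. simpl.
        rewrite Rmult_1_r. apply Rmult_le_compat_r; auto using Rabs_pos. }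
      lra. }
    assert (Rabs (exp a - 1) * Rabs (sin b) <= 2 * Rabs a * Rabs b).
    { apply Rmult_le_compat; auto using Rabs_pos. }
    lra. }
  assert (a ^ 2 <= c ^ 2).
  { rewrite <- (Rabs_right (a^2)) by (apply Rle_ge, pow2_ge_0). rewrite <- RPow_abs. apply pow_incr. split; auto using Rabs_pos. }
  assert (b ^ 2 <= c ^ 2).
  { rewrite <- (Rabs_right (b^2)) by (apply Rle_ge, pow2_ge_0). rewrite <- RPow_abs. apply pow_incr. split; auto using Rabs_pos. }
  assert (Rabs a * Rabs b <= c ^ 2).
  { simpl. rewrite Rmult_1_r. apply Rmult_le_compat; auto using Rabs_pos. }
  lra.
Qed.

Definition Ccv (u : nat -> C) (L : C) :=
  is_lim_seq (fun m => Re (u m)) (Re L) /\ is_lim_seq (fun m => Im (u m)) (Im L).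

Lemma Clim_cv u L : Ccv u L -> Clim u = L.
Proof.
  intros [H1 H2]. unfold Clim. rewrite (is_lim_seq_unique _ _ H1), (is_lim_seq_unique _ _ H2).
  destruct L; reflexivity.
Qed.

Lemma Ccv_mult u v L1 L2 : Ccv u L1 -> Ccv v L2 -> Ccv (fun m => Cmult (u m) (v m)) (Cmult L1 L2).
Proof.
  intros [H1 H2] [H3 H4]. split; simpl.
  - apply is_lim_seq_minus'; apply is_lim_seq_mult'; auto.
  - apply is_lim_seq_plus'; apply is_lim_seq_mult'; auto.
Qed.

Lemma Ccv_ext_loc u v L N : (forall m, (N <= m)%nat -> u m = v m) -> Ccv u L -> Ccv v L.
Proof.
  intros He [H1 H2]. split.
  - eapply is_lim_seq_ext_loc. 2: exact H1. exists N. intros m Hm. rewrite He; auto.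
  - eapply is_lim_seq_ext_loc. 2: exact H2. exists N. intros m Hm. rewrite He; auto.
Qed.

Lemma is_lim_seq_invINR : is_lim_seq (fun n => / INR n) 0.
Proof.
  replace (Finite 0) with (Rbar_inv p_infty) by reflexivity.
  apply is_lim_seq_inv. apply is_lim_seq_INR. discriminate.
Qed.

Lemma lim_shift (f : nat -> R) c : is_lim_seq f 0 -> is_lim_seq (fun m => f m + c) c.
Proof.
  intro H. pose proof (is_lim_seq_plus' _ _ 0 c H (is_lim_seq_const c)). rewrite Rplus_0_l in H0. exact H0.
Qed.

Lemma Ccv_bound u L K N : (forall m, (N <= m)%nat -> Cmod (Cminus (u m) L) <= K / INR m) -> Ccv u L.
Proof.
  intros H.
  assert (Hb : is_lim_seq (fun m => K / INR m) 0).
  { replace (Finite 0) with (Rbar_mult K 0) by (simpl; f_equal; try ring).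
    apply is_lim_seq_scal_l. apply is_lim_seq_invINR. }
  assert (Hb1 : is_lim_seq (fun m => - (K / INR m)) 0).
  { replace (Finite 0) with (Rbar_opp 0) by (simpl; f_equal; try ring). apply (is_lim_seq_opp (fun m => K / INR m) 0). exact Hb. }
  split.
  - apply is_lim_seq_ext with (fun m => Re (Cminus (u m) L) + Re L).
    { intro m. destruct (u m), L; simpl; ring. }
    apply lim_shift.
    
    apply is_lim_seq_le_le_loc with (fun m => - (K / INR m)) (fun m => K / INR m); auto.
    exists N. intros m Hm. apply Rabs_le_between. eapply Rle_trans. apply re_le_Cmod. auto.
  - apply is_lim_seq_ext with (fun m => Im (Cminus (u m) L) + Im L).
    { intro m. destruct (u m), L; simpl; ring. }
    apply lim_shift.
    apply is_lim_seq_le_le_loc with (fun m => - (K / INR m)) (fun m => K / INR m); auto.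
    exists N. intros m Hm. apply Rabs_le_between. eapply Rle_trans. apply im_le_Cmod. auto.
Qed.

Definition gseq (z : C) (m : nat) : C :=
  Cdiv (Cmult (RtoC (INR (fact m))) (cpow_nat m z)) (rising_prod z m).

Definition np (z : C) := forall j : nat, Cplus z (RtoC (INR j)) <> RtoC 0.

Lemma cpow_cexp m z : cpow_nat m z = cexp (Cmult z (RtoC (ln (INR m)))).
Proof.
  unfold cpow_nat, cexp. destruct z as [a b]. simpl.
  apply injective_projections; simpl; f_equal; f_equal; ring.
Qed.

Lemma cpow_S m z : (1 <= m)%nat ->
  cpow_nat (S m) z = Cmult (cpow_nat m z) (cexp (Cmult z (RtoC (ln (INR (S m)) - ln (INR m))))).
Proof.
  intros Hm. rewrite !cpow_cexp, <- cexp_add. f_equal.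
  destruct z as [a b]. unfold RtoC, Cmult, Cplus; simpl. apply injective_projections; simpl; ring.
Qed.

Lemma cpow_z1 m z : (1 <= m)%nat -> cpow_nat m (Cplus z (RtoC 1)) = Cmult (cpow_nat m z) (RtoC (INR m)).
Proof.
  intros Hm. assert (0 < INR m) by (apply lt_0_INR; lia).
  rewrite !cpow_cexp.
  replace (Cmult (Cplus z (RtoC 1)) (RtoC (ln (INR m)))) with (Cplus (Cmult z (RtoC (ln (INR m)))) (RtoC (ln (INR m)))) by ring.
  rewrite cexp_add. f_equal. unfold cexp; simpl. rewrite exp_ln, cos_0, sin_0 by auto.
  unfold RtoC. f_equal; ring.
Qed.

Lemma rising_nz z m : np z -> rising_prod z m <> RtoC 0.
Proof.
  intros H. induction m; cbn [rising_prod].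
  - specialize (H O). intro E; apply H. rewrite E. simpl INR. apply Cplus_0_r.
  - apply Cmult_neq_0; auto.
Qed.

Lemma rising_shift z m : rising_prod z (S m) = Cmult z (rising_prod (Cplus z (RtoC 1)) m).
Proof.
  induction m.
  - simpl. unfold RtoC. f_equal.
  - change (rising_prod z (S (S m))) with (Cmult (rising_prod z (S m)) (Cplus z (RtoC (INR (S (S m)))))).
    rewrite IHm. simpl rising_prod at 2.
    rewrite (S_INR (S m)). unfold RtoC. destruct z as [a b]. unfold Cmult, Cplus; simpl.
    apply injective_projections; simpl; ring.
Qed.

Lemma ln_bounds x : 1 <= x ->
  0 <= ln (x + 1) - ln x <= / x /\ 1 <= (x + 1) * (ln (x + 1) - ln x) <= 1 + / x.
Proof.
  intros Hx.
  assert (HL : ln (x + 1) - ln x = ln ((x + 1) / x)) by (rewrite ln_div; lra).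
  assert (U : ln (x + 1) - ln x <= / x).
  { rewrite HL. rewrite <- (ln_exp (/ x)). apply ln_le.
    apply Rdiv_lt_0_compat; lra.
    replace ((x + 1) / x) with (1 + / x) by (field; lra). apply exp_ineq1_le. }
  assert (Lo : / (x + 1) <= ln (x + 1) - ln x).
  { assert (H2 : ln (x / (x + 1)) <= - / (x + 1)).
    { rewrite <- (ln_exp (- / (x + 1))). apply ln_le. apply Rdiv_lt_0_compat; lra.
      replace (x / (x + 1)) with (1 + - / (x + 1)) by (field; lra). apply exp_ineq1_le. }
    rewrite ln_div in H2 by lra. lra. }
  assert (0 < / (x + 1)) by (apply Rinv_0_lt_compat; lra).
  split. lra. split.
  - apply Rle_trans with ((x+1) * / (x+1)). right; field; lra. apply Rmult_le_compat_l; lra.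
  - apply Rle_trans with ((x+1) * / x). apply Rmult_le_compat_l; lra. right; field; lra.
Qed.

Lemma rho_bound (z : C) (x : R) : 1 <= x -> 2 * Cmod z + 2 <= x ->
  Cmod (Cminus (Cdiv (Cmult (RtoC (x + 1)) (cexp (Cmult z (RtoC (ln (x + 1) - ln x))))) (Cplus z (RtoC (x + 1)))) (RtoC 1))
  <= 2 * (12 * Cmod z ^ 2 + Cmod z) / x ^ 2.
Proof.
  intros Hx1 Hx2.
  destruct (ln_bounds x Hx1) as [[L0 L1] [L2 L3]].
  set (L := ln (x + 1) - ln x) in *.
  set (w := Cmult z (RtoC L)).
  set (E := cexp w).
  pose proof (Cmod_ge_0 z) as Hz0.
  assert (Hw : Cmod w <= Cmod z / x).
  { unfold w. rewrite Cmod_mult, Cmod_R, Rabs_right by lra. unfold Rdiv. apply Rmult_le_compat_l; lra. }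
  assert (Hw2 : Cmod w <= / 2).
  { eapply Rle_trans. apply Hw. apply Rmult_le_reg_r with x. lra. unfold Rdiv. rewrite Rmult_assoc, Rinv_l by lra. lra. }
  pose proof (cexp_bound w Hw2) as HE. fold E in HE.
  set (Dn := Cplus z (RtoC (x + 1))).
  assert (HD : x / 2 <= Cmod Dn).
  { assert (Cmod (RtoC (x + 1)) <= Cmod Dn + Cmod z).
    { replace (RtoC (x + 1)) with (Cplus Dn (Copp z)) by (unfold Dn; ring).
      eapply Rle_trans. apply Cmod_triangle. rewrite Cmod_opp. lra. }
    rewrite Cmod_R, Rabs_right in H by lra. lra. }
  assert (HDnz : Dn <> RtoC 0).
  { intro E0. rewrite E0, Cmod_0 in HD. lra. }
  set (N := Cplus (Cmult (RtoC (x + 1)) (Cminus (Cminus E (RtoC 1)) w)) (Cmult z (RtoC ((x + 1) * L - 1)))).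
  assert (HN : Cminus (Cdiv (Cmult (RtoC (x + 1)) E) Dn) (RtoC 1) = Cdiv N Dn).
  { unfold N, w, Dn in *. field_simplify; auto.
    f_equal. unfold RtoC, Cmult, Cplus, Cminus, Copp; destruct z, E; simpl.
    apply injective_projections; simpl; ring. }
  rewrite HN, Cmod_div by auto.
  assert (HNb : Cmod N <= (12 * Cmod z ^ 2 + Cmod z) / x).
  { unfold N. eapply Rle_trans. apply Cmod_triangle. rewrite !Cmod_mult, !Cmod_R.
    rewrite (Rabs_right (x + 1)) by lra. rewrite (Rabs_right ((x + 1) * L - 1)) by lra.
    assert (A1 : (x + 1) * Cmod (Cminus (Cminus E (RtoC 1)) w) <= 12 * Cmod z ^ 2 / x).
    { eapply Rle_trans. apply Rmult_le_compat_l. lra. apply HE.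
      assert (Cmod w ^ 2 <= (Cmod z / x) ^ 2) by (apply pow_incr; split; auto using Cmod_ge_0).
      replace (12 * Cmod z ^ 2 / x) with (2 * x * 6 * (Cmod z / x) ^ 2) by (field; lra).
      assert (0 <= Cmod w ^ 2) by (apply pow2_ge_0).
      apply Rle_trans with ((x + 1) * (6 * (Cmod z / x) ^ 2)). apply Rmult_le_compat_l; lra.
      assert (0 <= (Cmod z / x) ^ 2) by apply pow2_ge_0. nra. }
    assert (A2 : Cmod z * ((x + 1) * L - 1) <= Cmod z / x).
    { unfold Rdiv. apply Rmult_le_compat_l; lra. }
    unfold Rdiv in *. lra. }
  assert (0 < Cmod Dn) by lra.
  unfold Rdiv. apply Rle_trans with (((12 * Cmod z ^ 2 + Cmod z) / x) * / (x / 2)).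
  - apply Rmult_le_compat. apply Cmod_ge_0. left; apply Rinv_0_lt_compat; auto. auto.
    apply Rinv_le_contravar; lra.
  - right. field. lra.
Qed.

Definition rho (z : C) (m : nat) : C :=
  Cdiv (Cmult (RtoC (INR m + 1)) (cexp (Cmult z (RtoC (ln (INR m + 1) - ln (INR m))))))
       (Cplus z (RtoC (INR m + 1))).

Lemma gseq_S z m : np z -> (1 <= m)%nat -> gseq z (S m) = Cmult (gseq z m) (rho z m).
Proof.
  intros Hz Hm. unfold gseq, rho.
  rewrite cpow_S by auto. rewrite fact_simpl, mult_INR.
  change (rising_prod z (S m)) with (Cmult (rising_prod z m) (Cplus z (RtoC (INR (S m))))).
  pose proof (rising_nz z m Hz). pose proof (Hz (S m)).
  rewrite !S_INR in *.
  generalize (cexp (Cmult z (RtoC (ln (INR m + 1) - ln (INR m))))) (cpow_nat m z) (INR (fact m)); intros E P F. rewrite RtoC_mult, !RtoC_plus. rewrite RtoC_plus in H0. field. split; auto.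
Qed.

Lemma ex_series_tel : ex_series (fun k => / (INR (k + 1) * INR (k + 2))).
Proof.
  exists 1. apply is_lim_series.
  apply is_lim_seq_ext with (fun n => 1 - / INR (n + 2)).
  { intro n. induction n.
    - rewrite sum_O. replace (0 + 1)%nat with 1%nat by lia. replace (0+2)%nat with 2%nat by lia. simpl. field.
    - rewrite sum_Sn. rewrite <- IHn. change (AbelianMonoid.plus R_AbelianMonoid (AbelianMonoid.class R_AbelianMonoid)) with Rplus.
      replace (S n + 1)%nat with (n + 2)%nat by lia. replace (S n + 2)%nat with (S (n + 2)) by lia.
      rewrite S_INR. assert (0 < INR (n + 2)) by (apply lt_0_INR; lia). unfold plus; simpl. field. lra. }
  replace (Finite 1) with (Rbar_minus 1 0) by (simpl; f_equal; ring).
  apply is_lim_seq_minus'. apply is_lim_seq_const.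
  apply (is_lim_seq_incr_n (fun n => / INR n) 2 0). apply is_lim_seq_invINR.
Qed.

Lemma gamma_cv z : np z -> exists L, Ccv (gseq z) L.
Proof.
  intros Hz.
  destruct (INR_archimed 1 (2 * Cmod z + 2)) as [M HM]. lra. rewrite Rmult_1_r in HM.
  pose proof (Cmod_ge_0 z).
  assert (HM3 : (3 <= M)%nat).
  { destruct (le_lt_dec 3 M); auto. assert (INR M <= 2). { replace 2 with (INR 2) by (simpl; ring). apply le_INR; lia. } lra. }
  set (K := 2 * (12 * Cmod z ^ 2 + Cmod z)).
  assert (HK : 0 <= K) by (unfold K; pose proof (pow2_ge_0 (Cmod z)); lra).
  destruct (prod_cv (fun k => gseq z (k + M)) (fun k => rho z (k + M)) (fun k => K / INR (k + M) ^ 2)) as [L [H1 H2]].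
  - intro m. simpl. apply gseq_S; auto. lia.
  - intro m. unfold rho. assert (HI : INR M <= INR (m + M)) by (apply le_INR; lia).
    pose proof (rho_bound z (INR (m + M)) ltac:(assert (1 <= INR M) by (replace 1 with (INR 1) by reflexivity; apply le_INR; lia); lra) ltac:(lra)).
    exact H0.
  - apply (ex_series_le (K:=R_AbsRing) (V:=R_CompleteNormedModule)) with (fun k => K * / (INR (k + 1) * INR (k + 2))).
    + intro k. unfold norm; simpl. unfold abs; simpl.
      assert (0 < INR (k + 1)) by (apply lt_0_INR; lia). assert (0 < INR (k + 2)) by (apply lt_0_INR; lia).
      assert (INR (k + 2) <= INR (k + M)) by (apply le_INR; lia).
      assert (INR (k + 1) * INR (k + 2) <= INR (k + M) ^ 2) by (assert (INR (k + 1) <= INR (k + 2)) by (apply le_INR; lia); simpl; nra).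
      rewrite Rabs_right. unfold Rdiv. apply Rmult_le_compat_l; auto. apply Rinv_le_contravar; nra.
      apply Rle_ge. unfold Rdiv. apply Rmult_le_pos; auto. left; apply Rinv_0_lt_compat. simpl; nra.
    + destruct ex_series_tel as [l Hl]. exists (K * l). apply (is_series_scal_l (K:=R_AbsRing) (V:=R_NormedModule)). exact Hl.
  - exists L. split.
    + apply (is_lim_seq_incr_n (fun m => Re (gseq z m)) M). exact H1.
    + apply (is_lim_seq_incr_n (fun m => Im (gseq z m)) M). exact H2.
Qed.

Lemma CGamma_gseq z : CGamma z = Clim (gseq z).
Proof. reflexivity. Qed.

Lemma gseq_z1 z m : np z -> (1 <= m)%nat ->
  gseq (Cplus z (RtoC 1)) m = Cmult (gseq z m) (Cdiv (Cmult z (RtoC (INR m))) (Cplus z (RtoC (INR m + 1)))).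
Proof.
  intros Hz Hm. unfold gseq. rewrite cpow_z1 by auto.
  pose proof (rising_shift z m) as HR. cbn [rising_prod] in HR.
  pose proof (rising_nz z m Hz) as H1. pose proof (Hz (S m)) as H2. pose proof (Hz O) as H3.
  rewrite S_INR in H2, HR. simpl INR in H3. rewrite Cplus_0_r in H3.
  assert (HR' : rising_prod (Cplus z (RtoC 1)) m = Cdiv (Cmult (rising_prod z m) (Cplus z (RtoC (INR m + 1)))) z).
  { rewrite HR. field. auto. }
  rewrite HR'. rewrite !RtoC_plus in *. field. repeat split; auto.
Qed.

Lemma cm_bound z m : 2 * Cmod z + 2 <= INR m ->
  Cmod (Cminus (Cdiv (Cmult z (RtoC (INR m))) (Cplus z (RtoC (INR m + 1)))) z) <= 2 * Cmod z * Cmod (Cplus z (RtoC 1)) / INR m.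
Proof.
  intros Hm. pose proof (Cmod_ge_0 z).
  set (x := INR m) in *.
  set (Dn := Cplus z (RtoC (x + 1))).
  assert (HD : x / 2 <= Cmod Dn).
  { assert (Cmod (RtoC (x + 1)) <= Cmod Dn + Cmod z).
    { replace (RtoC (x + 1)) with (Cplus Dn (Copp z)) by (unfold Dn; ring).
      eapply Rle_trans. apply Cmod_triangle. rewrite Cmod_opp. lra. }
    rewrite Cmod_R, Rabs_right in H0 by lra. lra. }
  assert (HDnz : Dn <> RtoC 0). { intro E0. rewrite E0, Cmod_0 in HD. lra. }
  replace (Cminus (Cdiv (Cmult z (RtoC x)) Dn) z) with (Copp (Cdiv (Cmult z (Cplus z (RtoC 1))) Dn)).
  2:{ unfold Dn in *. rewrite RtoC_plus in *. field. auto. }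
  rewrite Cmod_opp, Cmod_div, Cmod_mult by auto.
  pose proof (Cmod_ge_0 (Cplus z (RtoC 1))).
  unfold Rdiv. replace (2 * Cmod z * Cmod (Cplus z (RtoC 1)) * / x) with (Cmod z * Cmod (Cplus z (RtoC 1)) * / (x / 2)) by (field; lra).
  apply Rmult_le_compat_l. apply Rmult_le_pos; auto. apply Rinv_le_contravar; lra.
Qed.

Lemma CGamma_S z : np z -> CGamma (Cplus z (RtoC 1)) = Cmult z (CGamma z).
Proof.
  intros Hz. destruct (gamma_cv z Hz) as [L HL].
  rewrite !CGamma_gseq. rewrite (Clim_cv _ _ HL).
  destruct (INR_archimed 1 (2 * Cmod z + 2)) as [N HN]. lra. rewrite Rmult_1_r in HN.
  pose proof (Cmod_ge_0 z).
  assert (HN1 : (1 <= N)%nat).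
  { destruct N. simpl in HN. lra. lia. }
  apply Clim_cv. replace (Cmult z L) with (Cmult L z) by ring.
  apply Ccv_ext_loc with (fun m => Cmult (gseq z m) (Cdiv (Cmult z (RtoC (INR m))) (Cplus z (RtoC (INR m + 1))))) N.
  { intros m Hm. rewrite gseq_z1; auto. lia. }
  apply Ccv_mult; auto.
  apply Ccv_bound with (2 * Cmod z * Cmod (Cplus z (RtoC 1))) N.
  intros m Hm. apply cm_bound. assert (INR N <= INR m) by (apply le_INR; lia). lra.
Qed.

Definition npi (z : C) := forall j : nat, Cplus z (RtoC (INR (S j))) <> RtoC 0.

Definition tH (z : C) (j : nat) : C :=
  Cdiv z (Cmult (RtoC (INR (S j))) (Cplus (RtoC (INR (S j))) z)).

Lemma CH_tH z : CH z = (Series (fun j => Re (tH z j)), Series (fun j => Im (tH z j))).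
Proof. reflexivity. Qed.

Lemma Dn_lower z x : 2 * Cmod z <= x -> x / 2 <= Cmod (Cplus z (RtoC x)).
Proof.
  intros Hx. pose proof (Cmod_ge_0 z).
  set (Dn := Cplus z (RtoC x)).
  assert (Cmod (RtoC x) <= Cmod Dn + Cmod z).
  { replace (RtoC x) with (Cplus Dn (Copp z)) by (unfold Dn; ring).
    eapply Rle_trans. apply Cmod_triangle. rewrite Cmod_opp. lra. }
  rewrite Cmod_R, Rabs_right in H0 by lra. lra.
Qed.

Lemma tH_bound z j : 2 * Cmod z <= INR (S j) ->
  Cmod (tH z j) <= 2 * Cmod z * / (INR (S j) * INR (S j)).
Proof.
  intros Hj. pose proof (Dn_lower z _ Hj) as HD.
  assert (0 < INR (S j)) by (apply lt_0_INR; lia).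
  assert (Hnz : Cplus (RtoC (INR (S j))) z <> RtoC 0).
  { intro E. rewrite Cplus_comm in E. rewrite E, Cmod_0 in HD. lra. }
  unfold tH. rewrite Cmod_div. rewrite Cmod_mult, Cmod_R, Rabs_right by lra.
  rewrite Cplus_comm. unfold Rdiv.
  replace (2 * Cmod z * / (INR (S j) * INR (S j))) with (Cmod z * / (INR (S j) * (INR (S j) / 2))) by (field; lra).
  apply Rmult_le_compat_l. apply Cmod_ge_0. apply Rinv_le_contravar. nra. apply Rmult_le_compat_l; lra.
  apply Cmult_neq_0; auto. intro E. apply (f_equal fst) in E. change (fst (RtoC (INR (S j)))) with (INR (S j)) in E. simpl fst in E. lra.
Qed.

Lemma ex_series_tH z (f : C -> R) : (forall c, Rabs (f c) <= Cmod c) -> ex_series (fun j => f (tH z j)).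
Proof.
  intros Hf.
  destruct (INR_archimed 1 (2 * Cmod z)) as [N HN]. lra. rewrite Rmult_1_r in HN.
  apply (ex_series_incr_n (K:=R_AbsRing) (V:=R_NormedModule) _ N).
  apply (ex_series_le (K:=R_AbsRing) (V:=R_CompleteNormedModule)) with (fun k => 2 * Cmod z * / (INR (k + 1) * INR (k + 2))).
  - intro k. unfold norm; simpl. unfold abs; simpl.
    eapply Rle_trans. apply Hf.
    assert (HI : INR N <= INR (S (N + k))) by (apply le_INR; lia).
    eapply Rle_trans. apply tH_bound. lra.
    pose proof (Cmod_ge_0 z).
    apply Rmult_le_compat_l. lra.
    assert (0 < INR (k + 1)) by (apply lt_0_INR; lia).
    assert (INR (k + 1) <= INR (S (N + k))) by (apply le_INR; lia).
    assert (INR (k + 2) <= INR (S (N + k)) + 1).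
    { rewrite <- S_INR. apply le_INR. lia. }
    assert (0 < INR (k + 2)) by (apply lt_0_INR; lia). apply Rinv_le_contravar. apply Rmult_lt_0_compat; lra.
    destruct N.
    + simpl in HN. pose proof (Cmod_ge_0 z). lra.
    + assert (INR (k + 2) <= INR (S (S N + k))) by (apply le_INR; lia). nra.
  - destruct ex_series_tel as [l Hl]. exists (2 * Cmod z * l).
    apply (is_series_scal_l (K:=R_AbsRing) (V:=R_NormedModule)). exact Hl.
Qed.

Lemma tH_diff z j : npi z ->
  Cminus (tH (Cplus z (RtoC 1)) j) (tH z j) =
  Cminus (Cinv (Cplus z (RtoC (INR (S j))))) (Cinv (Cplus z (RtoC (INR (S (S j)))))).
Proof.
  intros Hz. unfold tH. pose proof (Hz j) as H1. pose proof (Hz (S j)) as H2.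
  assert (H0 : RtoC (INR (S j)) <> RtoC 0).
  { intro E. apply (f_equal fst) in E. change (fst (RtoC (INR (S j)))) with (INR (S j)) in E. simpl fst in E.
    pose proof (lt_0_INR (S j) ltac:(lia)). lra. }
  rewrite (S_INR (S j)) in *. rewrite RtoC_plus in *.
  field. repeat split; auto.
Qed.

Lemma u_lim z : Ccv (fun m => Cinv (Cplus z (RtoC (INR (S m))))) (RtoC 0).
Proof.
  destruct (INR_archimed 1 (2 * Cmod z)) as [N HN]. lra. rewrite Rmult_1_r in HN.
  apply Ccv_bound with 2 (S N). intros m Hm.
  assert (HI : INR N <= INR m) by (apply le_INR; lia).
  assert (HI2 : INR m <= INR (S m)) by (apply le_INR; lia).
  assert (0 < INR m) by (apply lt_0_INR; lia).
  pose proof (Dn_lower z (INR (S m)) ltac:(lra)) as HD.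
  assert (Hnz : Cplus z (RtoC (INR (S m))) <> RtoC 0). { intro E. rewrite E, Cmod_0 in HD. lra. }
  replace (Cminus (Cinv (Cplus z (RtoC (INR (S m))))) (RtoC 0)) with (Cinv (Cplus z (RtoC (INR (S m))))) by ring.
  rewrite Cmod_inv by auto.
  unfold Rdiv. replace (2 * / INR m) with (/ (INR m / 2)) by (field; lra).
  apply Rinv_le_contravar; lra.
Qed.

Lemma tel_series (u : nat -> R) : is_lim_seq u 0 -> is_series (fun j => u j - u (S j)) (u O).
Proof.
  intros H. apply is_lim_series.
  apply is_lim_seq_ext with (fun n => u O - u (S n)).
  { intro n. induction n. rewrite sum_O. auto. rewrite sum_Sn, <- IHn. unfold plus; simpl. ring. }
  assert (H2 : is_lim_seq (fun n => u (S n)) 0) by (apply (is_lim_seq_incr_1 u 0); auto).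
  pose proof (is_lim_seq_minus' _ _ (u O) 0 (is_lim_seq_const (u O)) H2) as H3.
  rewrite Rminus_0_r in H3. exact H3.
Qed.

Lemma Re_minus a b : Re (Cminus a b) = Re a - Re b.
Proof. destruct a, b; simpl; ring. Qed.
Lemma Im_minus a b : Im (Cminus a b) = Im a - Im b.
Proof. destruct a, b; simpl; ring. Qed.

Lemma Cplus_fst a b : fst (Cplus a b) = fst a + fst b.
Proof. reflexivity. Qed.
Lemma Cplus_snd a b : snd (Cplus a b) = snd a + snd b.
Proof. reflexivity. Qed.

Lemma CH_S z : npi z -> CH (Cplus z (RtoC 1)) = Cplus (CH z) (Cinv (Cplus z (RtoC 1))).
Proof.
  intros Hz. rewrite !CH_tH. destruct (u_lim z) as [U1 U2].
  set (u := fun m => Cinv (Cplus z (RtoC (INR (S m))))) in *.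
  assert (Hu0 : u O = Cinv (Cplus z (RtoC 1))) by (unfold u; simpl INR; reflexivity).
  assert (HreS : ex_series (fun j => Re (tH (Cplus z (RtoC 1)) j))) by (apply ex_series_tH; apply re_le_Cmod).
  assert (HimS : ex_series (fun j => Im (tH (Cplus z (RtoC 1)) j))) by (apply ex_series_tH; apply im_le_Cmod).
  assert (Hre : ex_series (fun j => Re (tH z j))) by (apply ex_series_tH; apply re_le_Cmod).
  assert (Him : ex_series (fun j => Im (tH z j))) by (apply ex_series_tH; apply im_le_Cmod).
  pose proof (tel_series (fun m => Re (u m)) U1) as T1.
  pose proof (tel_series (fun m => Im (u m)) U2) as T2.
  pose proof (Series_minus _ _ HreS Hre) as M1.
  pose proof (Series_minus _ _ HimS Him) as M2.
  rewrite (Series_ext _ (fun j => Re (u j) - Re (u (S j)))) in M1.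
  2:{ intro j. rewrite <- !Re_minus. rewrite tH_diff by auto. reflexivity. }
  rewrite (Series_ext _ (fun j => Im (u j) - Im (u (S j)))) in M2.
  2:{ intro j. rewrite <- !Im_minus. rewrite tH_diff by auto. reflexivity. }
  rewrite (is_series_unique _ _ T1) in M1. rewrite (is_series_unique _ _ T2) in M2.
  rewrite Hu0 in M1, M2.
  apply injective_projections; rewrite ?Cplus_fst, ?Cplus_snd; cbn [fst snd]; [change (fst (Cinv (Cplus z (RtoC 1)))) with (Re (Cinv (Cplus z (RtoC 1)))) | change (snd (Cinv (Cplus z (RtoC 1)))) with (Im (Cinv (Cplus z (RtoC 1))))]; lra.
Qed.

Fixpoint pc (a : C) (k : nat) : C :=
  match k with O => RtoC 1 | S m => Cmult (pc a m) (Cplus a (RtoC (INR m))) end.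

Fixpoint hsum (a : C) (k : nat) : C :=
  match k with O => RtoC 0 | S m => Cplus (hsum a m) (Cinv (Cplus a (RtoC (INR m)))) end.

Lemma pc_S a k : pc a (S k) = Cmult a (pc (Cplus a (RtoC 1)) k).
Proof.
  induction k. simpl. ring.
  change (pc a (S (S k))) with (Cmult (pc a (S k)) (Cplus a (RtoC (INR (S k))))).
  rewrite IHk. cbn [pc]. rewrite S_INR, RtoC_plus. ring.
Qed.

Lemma hsum_S a k : hsum a (S k) = Cplus (Cinv a) (hsum (Cplus a (RtoC 1)) k).
Proof.
  induction k. simpl. replace (Cplus a (RtoC 0)) with a by ring. ring.
  change (hsum a (S (S k))) with (Cplus (hsum a (S k)) (Cinv (Cplus a (RtoC (INR (S k)))))).
  rewrite IHk. cbn [hsum]. rewrite S_INR, RtoC_plus.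
  replace (Cplus a (Cplus (RtoC (INR k)) (RtoC 1))) with (Cplus (Cplus a (RtoC 1)) (RtoC (INR k))) by ring. ring.
Qed.

Lemma pc_split a n k : (k <= n)%nat -> pc a n = Cmult (pc a k) (pc (Cplus a (RtoC (INR k))) (n - k)).
Proof.
  intros H. induction n.
  - assert (k = O) by lia. subst. simpl. ring.
  - destruct (Nat.eq_dec k (S n)) as [E|E].
    + subst. replace (S n - S n)%nat with 0%nat by lia. change (pc (Cplus a (RtoC (INR (S n)))) 0) with (RtoC 1). ring.
    + change (pc a (S n)) with (Cmult (pc a n) (Cplus a (RtoC (INR n)))).
      rewrite IHn by lia. replace (S n - k)%nat with (S (n - k)) by lia.
      change (pc (Cplus a (RtoC (INR k))) (S (n - k))) with (Cmult (pc (Cplus a (RtoC (INR k))) (n - k)) (Cplus (Cplus a (RtoC (INR k))) (RtoC (INR (n - k))))).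
      rewrite minus_INR by lia. rewrite RtoC_minus.
      replace (Cplus (Cplus a (RtoC (INR k))) (Cminus (RtoC (INR n)) (RtoC (INR k)))) with (Cplus a (RtoC (INR n))) by ring.
      ring.
Qed.

Lemma pc_nz a k : (forall i, Cplus a (RtoC (INR i)) <> RtoC 0) -> pc a k <> RtoC 0.
Proof. intros H. induction k; cbn [pc]. intro E. apply (f_equal fst) in E. simpl in E. lra. apply Cmult_neq_0; auto. Qed.

Lemma poch_dual a b k : (forall i, Cplus a (RtoC (INR i)) <> RtoC 0) ->
  poch (a, b) k = (pc a k, Cmult (Cmult b (pc a k)) (hsum a k)).
Proof.
  intros H. induction k.
  - cbn [poch pc hsum]. unfold d1. f_equal. ring.
  - change (poch (a, b) (S k)) with (dmul (poch (a, b) k) (dadd (a, b) (dc (INR k)))).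
    rewrite IHk. unfold dmul, dadd, dc. cbn [fst snd pc hsum]. specialize (H k).
    f_equal. field. auto.
Qed.

Lemma poch_dual0 a k : poch (a, RtoC 0) k = (pc a k, RtoC 0).
Proof.
  induction k.
  - reflexivity.
  - change (poch (a, RtoC 0) (S k)) with (dmul (poch (a, RtoC 0) k) (dadd (a, RtoC 0) (dc (INR k)))).
    rewrite IHk. unfold dmul, dadd, dc. cbn [fst snd pc]. f_equal; ring.
Qed.

Lemma Csum_ext n f g : (forall k, (k <= n)%nat -> f k = g k) -> Csum n f = Csum n g.
Proof. induction n; simpl; intros H. apply H; lia. rewrite IHn by (intros; apply H; lia). rewrite H; auto. Qed.

Lemma Csum_minus n f g : Cminus (Csum n f) (Csum n g) = Csum n (fun k => Cminus (f k) (g k)).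
Proof. induction n; simpl. auto. rewrite <- IHn. ring. Qed.

Lemma Csum_lin n (a b : C) f g : Csum n (fun k => Cmult a (Cplus (Cmult b (f k)) (g k))) = Cmult a (Cplus (Cmult b (Csum n f)) (Csum n g)).
Proof. induction n; simpl. auto. rewrite IHn. ring. Qed.

Lemma dsum_fst n f : fst (dsum (S n) f) = Csum n (fun k => fst (f k)).
Proof. induction n. simpl. ring. change (dsum (S (S n)) f) with (dadd (dsum (S n) f) (f (S n))). unfold dadd. cbn [fst]. rewrite IHn. reflexivity. Qed.

Lemma dsum_snd n f : snd (dsum (S n) f) = Csum n (fun k => snd (f k)).
Proof. induction n. simpl. ring. change (dsum (S (S n)) f) with (dadd (dsum (S n) f) (f (S n))). unfold dadd. cbn [snd]. rewrite IHn. reflexivity. Qed.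

Lemma Gamma_iter z k : np z -> CGamma (Cplus z (RtoC (INR k))) = Cmult (CGamma z) (pc z k).
Proof.
  intros Hz. induction k.
  - change (INR 0) with 0%R. replace (Cplus z (RtoC 0)) with z by ring. cbn [pc hsum]. ring.
  - rewrite S_INR, RtoC_plus. replace (Cplus z (Cplus (RtoC (INR k)) (RtoC 1))) with (Cplus (Cplus z (RtoC (INR k))) (RtoC 1)) by ring.
    rewrite CGamma_S. rewrite IHk. cbn [pc]. ring.
    intro j. replace (Cplus (Cplus z (RtoC (INR k))) (RtoC (INR j))) with (Cplus z (RtoC (INR (k + j)))).
    apply Hz. rewrite plus_INR, RtoC_plus. ring.
Qed.

Lemma H_iter z k : npi z -> CH (Cplus z (RtoC (INR k))) = Cplus (CH z) (hsum (Cplus z (RtoC 1)) k).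
Proof.
  intros Hz. induction k.
  - change (INR 0) with 0%R. replace (Cplus z (RtoC 0)) with z by ring. cbn [pc hsum]. ring.
  - rewrite S_INR, RtoC_plus. replace (Cplus z (Cplus (RtoC (INR k)) (RtoC 1))) with (Cplus (Cplus z (RtoC (INR k))) (RtoC 1)) by ring.
    rewrite CH_S. rewrite IHk. cbn [hsum].
    replace (Cplus (Cplus z (RtoC 1)) (RtoC (INR k))) with (Cplus (Cplus z (RtoC (INR k))) (RtoC 1)) by ring. ring.
    intro j. replace (Cplus (Cplus z (RtoC (INR k))) (RtoC (INR (S j)))) with (Cplus z (RtoC (INR (S (k + j))))).
    apply Hz. rewrite !S_INR, plus_INR, !RtoC_plus. ring.
Qed.

Lemma Cinv_0' : Cinv (RtoC 0) = RtoC 0.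
Proof. unfold Cinv, RtoC; simpl. f_equal; unfold Rdiv; ring. Qed.

Lemma Cdiv_0r x : Cdiv x (RtoC 0) = RtoC 0.
Proof. unfold Cdiv. rewrite Cinv_0'. ring. Qed.

Lemma neg_int_ne z j : ~ is_neg_int z -> Cplus z (RtoC (INR (S j))) <> RtoC 0.
Proof.
  intros H E. apply H. exists j.
  replace z with (Cminus (Cplus z (RtoC (INR (S j)))) (RtoC (INR (S j)))) by ring.
  rewrite E. unfold RtoC, Cminus, Copp, Cplus; simpl. f_equal; ring.
Qed.

Lemma RtoC_nat_ne k : RtoC (INR (S k)) <> RtoC 0.
Proof.
  intro E. apply (f_equal fst) in E. change (fst (RtoC (INR (S k)))) with (INR (S k)) in E. simpl fst in E.
  pose proof (lt_0_INR (S k) ltac:(lia)). lra.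
Qed.

Lemma wt_C k : RtoC (wt 1 k) = Cinv (Cplus (RtoC (INR k)) (RtoC 2)).
Proof.
  unfold wt. replace (k + 1 + 1)%nat with (S (S k)) by lia.
  rewrite RtoC_inv. f_equal. rewrite !S_INR, !RtoC_plus. ring.
  pose proof (lt_0_INR (S (S k)) ltac:(lia)). lra.
Qed.

Lemma beta_C k : RtoC (beta 1 k) = Cinv (Cmult (Cplus (RtoC (INR k)) (RtoC 1)) (Cplus (RtoC (INR k)) (RtoC 2))).
Proof.
  assert (E : beta 1 k = / (INR (S k) * INR (S (S k)))).
  { unfold beta. replace (1 + k + 1)%nat with (S (S k)) by lia.
    rewrite !fact_simpl, !mult_INR. simpl (fact 1). simpl (fact 0).
    assert (0 < INR (fact k)) by (apply lt_0_INR, lt_O_fact).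
    rewrite !S_INR. simpl INR. field. pose proof (pos_INR k). split; lra. }
  rewrite E. rewrite RtoC_inv. f_equal. rewrite !S_INR, RtoC_mult, !RtoC_plus. ring.
  rewrite !S_INR. pose proof (pos_INR k). nra.
Qed.

Theorem theorem24 (n : nat) (r s : C)
  (hr : ~ is_neg_int r) (hs : ~ is_neg_int s) (hs0 : s <> RtoC 0)
  (hrs : ~ is_neg_int (Cminus r s)) :
  let nk := fun k : nat => RtoC (Binomial.C n k) in
  let K := fun k : nat => RtoC (INR k) in
  let sg := fun k : nat => RtoC ((-1) ^ k)%R in
  Cminus
    (Csum n (fun k => Cdiv (Cmult (nk k)
        (Cminus (CH (Cplus (K k) s)) (CH (Cminus (Cplus (Cminus (K n) (K k)) r) s))))
      (Cmult (Cmult (Cplus (K k) (RtoC 2)) (Cplus (K k) s))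
             (Cbinom (Cplus (K n) r) (Cplus (K k) s)))))
    (Csum n (fun k => Cdiv (nk k)
      (Cmult (Cmult (Cplus (K k) (RtoC 2)) (Cmult (Cplus (K k) s) (Cplus (K k) s)))
             (Cbinom (Cplus (K n) r) (Cplus (K k) s)))))
  =
  Cminus
    (Csum n (fun k => Cdiv (Cmult (Cmult (nk k) (sg k))
        (Cminus (CH (Cplus (K k) s)) (CH (Cminus r s))))
      (Cmult (Cmult (Cmult (Cplus (K k) (RtoC 1)) (Cplus (K k) (RtoC 2))) (Cplus (K k) s))
             (Cbinom (Cplus (K k) r) (Cplus (K k) s)))))
    (Csum n (fun k => Cdiv (Cmult (nk k) (sg k))
      (Cmult (Cmult (Cmult (Cplus (K k) (RtoC 1)) (Cplus (K k) (RtoC 2)))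
                    (Cmult (Cplus (K k) s) (Cplus (K k) s)))
             (Cbinom (Cplus (K k) r) (Cplus (K k) s))))).
Proof.
  intros nk K sg. unfold nk, K, sg. clear nk K sg.
  set (c := Cplus (Cminus r s) (RtoC 1)).
  assert (Hs_all : forall i, Cplus s (RtoC (INR i)) <> RtoC 0).
  { intros [|i]. simpl INR. rewrite Cplus_0_r. auto. apply neg_int_ne; auto. }
  assert (Hc_all : forall i, Cplus c (RtoC (INR i)) <> RtoC 0).
  { intro i. replace (Cplus c (RtoC (INR i))) with (Cplus (Cminus r s) (RtoC (INR (S i)))).
    apply neg_int_ne; auto. unfold c. rewrite S_INR, RtoC_plus. ring. }
  assert (Hr_all : forall i, Cplus (Cplus r (RtoC 1)) (RtoC (INR i)) <> RtoC 0).
  { intro i. replace (Cplus (Cplus r (RtoC 1)) (RtoC (INR i))) with (Cplus r (RtoC (INR (S i)))).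
    apply neg_int_ne; auto. rewrite S_INR, RtoC_plus. ring. }
  assert (np_s1 : np (Cplus s (RtoC 1))).
  { intro j. replace (Cplus (Cplus s (RtoC 1)) (RtoC (INR j))) with (Cplus s (RtoC (INR (S j)))).
    apply Hs_all. rewrite S_INR, RtoC_plus. ring. }
  assert (np_c : np c) by (intro j; apply Hc_all).
  assert (np_r1 : np (Cplus r (RtoC 1))) by (intro j; apply Hr_all).
  assert (npi_s : npi s) by (intro j; apply neg_int_ne; auto).
  assert (npi_rs : npi (Cminus r s)) by (intro j; apply neg_int_ne; auto).
  set (Gs := CGamma (Cplus s (RtoC 1))).
  set (Grs := CGamma c).
  set (Gr := CGamma (Cplus r (RtoC 1))).
  assert (BL : forall k, (k <= n)%nat -> Cbinom (Cplus (RtoC (INR n)) r) (Cplus (RtoC (INR k)) s) =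
     Cdiv (Cmult Gr (pc (Cplus r (RtoC 1)) n)) (Cmult (Cmult Gs (pc (Cplus s (RtoC 1)) k)) (Cmult Grs (pc c (n - k))))).
  { intros k Hk. unfold Cbinom. unfold Gr, Gs, Grs. rewrite <- !Gamma_iter by auto.
    f_equal. f_equal. ring. f_equal. f_equal. ring. f_equal. unfold c. rewrite minus_INR, RtoC_minus by auto. ring. }
  assert (BR : forall k, Cbinom (Cplus (RtoC (INR k)) r) (Cplus (RtoC (INR k)) s) =
     Cdiv (Cmult Gr (pc (Cplus r (RtoC 1)) k)) (Cmult (Cmult Gs (pc (Cplus s (RtoC 1)) k)) Grs)).
  { intros k. unfold Cbinom. unfold Gr, Gs, Grs. rewrite <- !Gamma_iter by auto.
    f_equal. f_equal. ring. f_equal. f_equal. ring. f_equal. unfold c. ring. }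
  assert (HL1 : forall k, CH (Cplus (RtoC (INR k)) s) = Cplus (CH s) (hsum (Cplus s (RtoC 1)) k)).
  { intro k. rewrite <- H_iter by auto. f_equal. ring. }
  assert (HL2 : forall k, (k <= n)%nat -> CH (Cminus (Cplus (Cminus (RtoC (INR n)) (RtoC (INR k))) r) s) =
     Cplus (CH (Cminus r s)) (hsum c (n - k))).
  { intros k Hk. unfold c. rewrite <- H_iter by auto. f_equal. rewrite minus_INR, RtoC_minus by auto. ring. }
  assert (Csum0 : forall m, Csum m (fun _ => RtoC 0) = RtoC 0).
  { induction m; simpl; auto. rewrite IHm. ring. }
  destruct (Classical_Prop.classic (Gr = RtoC 0 \/ Gs = RtoC 0 \/ Grs = RtoC 0)) as [HZ|HNZ].
  { assert (ZL : forall k, (k <= n)%nat -> Cbinom (Cplus (RtoC (INR n)) r) (Cplus (RtoC (INR k)) s) = RtoC 0).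
    { intros k Hk. rewrite BL by auto. destruct HZ as [E|[E|E]]; rewrite E.
      unfold Cdiv. ring. rewrite Cmult_0_l, Cmult_0_l. apply Cdiv_0r.
      rewrite Cmult_0_l, Cmult_0_r. apply Cdiv_0r. }
    assert (ZR : forall k, Cbinom (Cplus (RtoC (INR k)) r) (Cplus (RtoC (INR k)) s) = RtoC 0).
    { intros k. rewrite BR. destruct HZ as [E|[E|E]]; rewrite E.
      unfold Cdiv. ring. rewrite Cmult_0_l, Cmult_0_l. apply Cdiv_0r.
      rewrite Cmult_0_r. apply Cdiv_0r. }
    assert (Z1 : forall f, (forall k, (k <= n)%nat -> f k = RtoC 0) -> Csum n f = RtoC 0).
    { intros f Hf. rewrite (Csum_ext n f (fun _ => RtoC 0)); auto. }
    rewrite !Csum_minus. rewrite (Z1 _), (Z1 _). reflexivity.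
    all: intros k Hk; first [rewrite ZL by auto | rewrite ZR]; rewrite !Cmult_0_r, !Cdiv_0r; ring. }
  assert (HGr : Gr <> RtoC 0) by tauto.
  assert (HGs : Gs <> RtoC 0) by tauto.
  assert (HGrs : Grs <> RtoC 0) by tauto.
  clear HNZ.
  set (sigma := (s, RtoC 1) : D).
  set (gamma := (c, Copp (RtoC 1)) : D).
  set (Kf := Cdiv (Cmult Gs Grs) (Cmult (Cmult Gr s) (pc (Cplus r (RtoC 1)) n))).
  set (X := Cminus (Cminus (CH s) (CH (Cminus r s))) (Cinv s)).
  assert (HPk : forall k, pc (Cplus s (RtoC 1)) k = Cdiv (Cmult (pc s k) (Cplus s (RtoC (INR k)))) s).
  { intro k. pose proof (pc_S s k) as E. cbn [pc] in E. rewrite E. field. auto. }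
  assert (HHk : forall k, hsum (Cplus s (RtoC 1)) k = Cminus (Cplus (hsum s k) (Cinv (Cplus s (RtoC (INR k))))) (Cinv s)).
  { intro k. pose proof (hsum_S s k) as E. cbn [hsum] in E. rewrite E. ring. }
  assert (LHS : Cminus
    (Csum n (fun k => Cdiv (Cmult (RtoC (Binomial.C n k))
        (Cminus (CH (Cplus (RtoC (INR k)) s)) (CH (Cminus (Cplus (Cminus (RtoC (INR n)) (RtoC (INR k))) r) s))))
      (Cmult (Cmult (Cplus (RtoC (INR k)) (RtoC 2)) (Cplus (RtoC (INR k)) s))
             (Cbinom (Cplus (RtoC (INR n)) r) (Cplus (RtoC (INR k)) s)))))
    (Csum n (fun k => Cdiv (RtoC (Binomial.C n k))
      (Cmult (Cmult (Cplus (RtoC (INR k)) (RtoC 2)) (Cmult (Cplus (RtoC (INR k)) s) (Cplus (RtoC (INR k)) s)))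
             (Cbinom (Cplus (RtoC (INR n)) r) (Cplus (RtoC (INR k)) s)))))
    = Cmult Kf (Cplus (Cmult X (fst (Phi n sigma gamma 1))) (snd (Phi n sigma gamma 1)))).
  { unfold Phi. rewrite dsum_fst, dsum_snd, <- Csum_lin, Csum_minus. apply Csum_ext. intros k Hk.
    rewrite BL, HL1, HL2 by auto.
    unfold sigma, gamma. rewrite !poch_dual by auto.
    unfold dmul, dc. cbn [fst snd]. rewrite wt_C.
    rewrite HPk, HHk.
    pose proof (Hs_all k). pose proof (pc_nz s k Hs_all). pose proof (pc_nz c (n - k) Hc_all).
    pose proof (pc_nz _ n Hr_all).
    assert (Cplus (RtoC (INR k)) (RtoC 2) <> RtoC 0).
    { replace (Cplus (RtoC (INR k)) (RtoC 2)) with (RtoC (INR (S (S k)))). apply RtoC_nat_ne.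
      rewrite !S_INR, !RtoC_plus. ring. }
    unfold Kf, X.
    assert (Cplus (RtoC (INR k)) s <> RtoC 0) by (rewrite Cplus_comm; auto).
    field. repeat split; try assumption. }
  assert (RHS : Cminus
    (Csum n (fun k => Cdiv (Cmult (Cmult (RtoC (Binomial.C n k)) (RtoC ((-1) ^ k)))
        (Cminus (CH (Cplus (RtoC (INR k)) s)) (CH (Cminus r s))))
      (Cmult (Cmult (Cmult (Cplus (RtoC (INR k)) (RtoC 1)) (Cplus (RtoC (INR k)) (RtoC 2))) (Cplus (RtoC (INR k)) s))
             (Cbinom (Cplus (RtoC (INR k)) r) (Cplus (RtoC (INR k)) s)))))
    (Csum n (fun k => Cdiv (Cmult (RtoC (Binomial.C n k)) (RtoC ((-1) ^ k)))
      (Cmult (Cmult (Cmult (Cplus (RtoC (INR k)) (RtoC 1)) (Cplus (RtoC (INR k)) (RtoC 2)))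
                    (Cmult (Cplus (RtoC (INR k)) s) (Cplus (RtoC (INR k)) s)))
             (Cbinom (Cplus (RtoC (INR k)) r) (Cplus (RtoC (INR k)) s)))))
    = Cmult Kf (Cplus (Cmult X (fst (Psi n sigma (dadd sigma gamma) 1))) (snd (Psi n sigma (dadd sigma gamma) 1)))).
  { unfold Psi. rewrite dsum_fst, dsum_snd, <- Csum_lin, Csum_minus. apply Csum_ext. intros k Hk.
    rewrite BR, HL1.
    assert (ER : dadd (dadd sigma gamma) (dc (INR k)) = (Cplus (Cplus r (RtoC 1)) (RtoC (INR k)), RtoC 0)).
    { unfold sigma, gamma, dadd, dc. cbn [fst snd]. unfold c. f_equal; ring. }
    rewrite ER. rewrite poch_dual0.
    unfold sigma. rewrite !poch_dual by auto.
    unfold dmul, dc. cbn [fst snd]. rewrite RtoC_mult, beta_C.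
    rewrite HPk, HHk.
    unfold Kf. rewrite (pc_split (Cplus r (RtoC 1)) n k Hk).
    pose proof (Hs_all k). pose proof (pc_nz s k Hs_all).
    pose proof (pc_nz _ k Hr_all).
    assert (pc (Cplus (Cplus r (RtoC 1)) (RtoC (INR k))) (n - k) <> RtoC 0).
    { apply pc_nz. intro i. replace (Cplus (Cplus (Cplus r (RtoC 1)) (RtoC (INR k))) (RtoC (INR i)))
        with (Cplus (Cplus r (RtoC 1)) (RtoC (INR (k + i)))). apply Hr_all. rewrite plus_INR, RtoC_plus. ring. }
    assert (Cplus (RtoC (INR k)) (RtoC 2) <> RtoC 0).
    { replace (Cplus (RtoC (INR k)) (RtoC 2)) with (RtoC (INR (S (S k)))). apply RtoC_nat_ne.
      rewrite !S_INR, !RtoC_plus. ring. }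
    assert (Cplus (RtoC (INR k)) (RtoC 1) <> RtoC 0).
    { replace (Cplus (RtoC (INR k)) (RtoC 1)) with (RtoC (INR (S k))). apply RtoC_nat_ne.
      rewrite !S_INR, !RtoC_plus. ring. }
    assert (Cplus (RtoC (INR k)) s <> RtoC 0) by (rewrite Cplus_comm; auto).
    unfold X.
    field. repeat split; try assumption. }
  rewrite LHS, RHS. rewrite Phi_Psi. reflexivity.
Qed.
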